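(* Let $L$ be a distributive lattice, let $B$ be the Boolean algebra generated by $L$, let $n\ge1$, and for each $i\in[n]$ let $a_i,b_i\in L$ with $a_i<b_i$. For $I\subseteq[n]$ let $\widehat{\mathbf e}_I\in L^n$ have $i$-th component $b_i$ if $i\in I$ and $a_i$ if $i\notin I$, and let $D=\{\widehat{\mathbf e}_I: I\subseteq[n]\}$. Let $f\colon D\to L$ be monotone and satisfy $$f(\widehat{\mathbf e}_{I\cup\{k\}})\wedge a_k\le f(\widehat{\mathbf e}_I)\le f(\widehat{\mathbf e}_{I\setminus\{k\}})\vee b_k\quad\text{for all } I\subseteq[n],\ k\in[n].$$ Let $p$ be the $n$-ary polynomial function over $B$ given by $p(\mathbf x)=\bigvee_{I\subseteq[n]}(c_I\wedge\bigwedge_{i\in I}x_i)$ for a monotone system of coefficients $c_I\in B$ ($I\subseteq[n]$). Then the following are equivalent: (i) $p|_D=f$; (ii) $c_I^-\le c_I\le c_I^+$ for all $I\subseteq[n]$; (iii) $p^-(\mathbf x)\le p(\mathbf x)\le p^+(\mathbf x)$ for all $\mathbf x\in L^n$.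
   Context: $B$ is the Boolean algebra generated by $L$ in which $L$ embeds (Birkhoff–Priestley), with bounds $0,1$ and complement $x\mapsto x'$. A system of coefficients is monotone if $I\subseteq J$ implies $c_I\le c_J$. $f$ monotone means $I\subseteq J\Rightarrow f(\widehat{\mathbf e}_I)\le f(\widehat{\mathbf e}_J)$. Define $c_I^-=f(\widehat{\mathbf e}_I)\wedge\bigwedge_{i\notin I}a_i'$ and $c_I^+=f(\widehat{\mathbf e}_I)\vee\bigvee_{i\in I}b_i'$ in $B$, and let $p^-(\mathbf x)=\bigvee_{I\subseteq[n]}(c_I^-\wedge\bigwedge_{i\in I}x_i)$, $p^+(\mathbf x)=\bigvee_{I\subseteq[n]}(c_I^+\wedge\bigwedge_{i\in I}x_i)$, polynomial functions over $B$. *)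

(* Defs.v *)
From HB Require Import structures.
From mathcomp Require Import all_boot all_order.
Set Implicit Arguments. Unset Strict Implicit. Unset Printing Implicit Defensive.
Import Order.Theory.
Local Open Scope order_scope.

Definition lattice_embedding (dL dB : Order.disp_t) (L : distrLatticeType dL)
  (B : ctbDistrLatticeType dB) (h : L -> B) : Prop :=
  [/\ injective h,
      (forall x y, h (x `&` y) = h x `&` h y) &
      (forall x y, h (x `|` y) = h x `|` h y)].

Definition generates_boolean (dL dB : Order.disp_t) (L : distrLatticeType dL)
  (B : ctbDistrLatticeType dB) (h : L -> B) : Prop :=
  forall S : B -> Prop,
    (forall x, S (h x)) -> S \bot -> S \top ->
    (forall x y, S x -> S y -> S (x `&` y)) ->
    (forall x y, S x -> S y -> S (x `|` y)) ->
    (forall x, S x -> S (~` x)) ->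
    forall y, S y.

Definition ehat (dL : Order.disp_t) (L : distrLatticeType dL) (n : nat)
  (a b : 'I_n -> L) (I : {set 'I_n}) : 'I_n -> L :=
  fun i => if i \in I then b i else a i.

Definition polyfun (dB : Order.disp_t) (B : ctbDistrLatticeType dB) (n : nat)
  (c : {set 'I_n} -> B) (x : 'I_n -> B) : B :=
  \join_(I : {set 'I_n}) (c I `&` \meet_(i in I) x i).

Definition monotone_coeffs (dB : Order.disp_t) (B : ctbDistrLatticeType dB) (n : nat)
  (c : {set 'I_n} -> B) : Prop :=
  forall I J : {set 'I_n}, I \subset J -> c I <= c J.

(* c_I^- and c_I^+ ; fI = f(\hat e_I) *)
Definition cminus (dL dB : Order.disp_t) (L : distrLatticeType dL)
  (B : ctbDistrLatticeType dB) (h : L -> B) (n : nat) (a : 'I_n -> L)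
  (f : {set 'I_n} -> L) (I : {set 'I_n}) : B :=
  h (f I) `&` \meet_(i | i \notin I) ~` (h (a i)).

Definition cplus (dL dB : Order.disp_t) (L : distrLatticeType dL)
  (B : ctbDistrLatticeType dB) (h : L -> B) (n : nat) (b : 'I_n -> L)
  (f : {set 'I_n} -> L) (I : {set 'I_n}) : B :=
  h (f I) `|` \join_(i in I) ~` (h (b i)).

(* Main.v *)
Require Import Defs.
From HB Require Import structures.
From mathcomp Require Import all_boot all_order.
Import Order.Theory.
Local Open Scope order_scope.

Section Aux.
Variables (dL dB : Order.disp_t) (L : distrLatticeType dL) (B : ctbDistrLatticeType dB).
Variable (h : L -> B).
HB.instance Definition _ := Monoid.isAddLaw.Build B (@Order.meet _ B) (@Order.join _ B) meetUl meetUr.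
Hypothesis hemb : lattice_embedding h.
Variables (n : nat) (a b : 'I_n -> L).
Hypothesis hab : forall i, a i <= b i.
Variable F : {set 'I_n} -> L.
Hypothesis Fmono : forall I J : {set 'I_n}, I \subset J -> F I <= F J.
Hypothesis Fcond : forall (I : {set 'I_n}) (k : 'I_n),
      F (k |: I) `&` a k <= F I /\ F I <= F (I :\ k) `|` b k.

Lemma hmono x y : x <= y -> h x <= h y.
Proof. case: hemb => _ hI _; rewrite !leEmeet -hI => /eqP ->; done. Qed.

Lemma shunt (x y z : B) : x `&` y <= z -> x <= z `|` ~` y.
Proof. move=> H; rewrite -[x]meetx1 -(joinxC y) meetUr; apply: leU2 => //; exact: leIr. Qed.

Lemma Ra s I : h (F I) `&` \meet_(i <- s) h (a i) <= h (F (I :\: [set i in s])).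
Proof.
case: hemb => _ hI _.
elim: s I => [|k s IH] I.
  rewrite big_nil meetx1 (_ : [set i in [::]] = set0) ?setD0 //; apply/setP=> i; by rewrite !inE.
rewrite big_cons meetA.
rewrite -(_ : (I :\ k) :\: [set i in s] = I :\: [set i in k :: s]); last first.
  by apply/setP=> x; rewrite !inE; case: (x \in s); case: (x == k).
apply: le_trans (IH (I :\ k)).
apply: leI2 => //; rewrite -hI; apply: hmono.
apply: le_trans (Fcond (I :\ k) k).1; apply: leI2 => //; apply: Fmono.
by apply/subsetP=> x; rewrite !inE; case: (x == k).
Qed.

Lemma Rb s J : h (F J) `&` \meet_(i <- s) ~` h (b i) <= h (F (J :\: [set i in s])).
Proof.
case: hemb => _ hI hU.
elim: s J => [|k s IH] J.
  rewrite big_nil meetx1 (_ : [set i in [::]] = set0) ?setD0 //; apply/setP=> i; by rewrite !inE.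
rewrite big_cons meetA.
rewrite -(_ : (J :\ k) :\: [set i in s] = J :\: [set i in k :: s]); last first.
  by apply/setP=> x; rewrite !inE; case: (x \in s); case: (x == k).
apply: le_trans (IH (J :\ k)).
apply: leI2 => //.
have := hmono _ _ (Fcond J k).2; rewrite hU => H1.
apply: le_trans (leI2 H1 (lexx _)) _.
rewrite meetUl leUx leIl /= meetxC; exact: le0x.
Qed.

Lemma lemA I J : h (F I) `&` \meet_(i in I) h (ehat a b J i) <= h (F J).
Proof.
have X : \meet_(i in I) h (ehat a b J i) <= \meet_(i <- enum (I :\: J)) h (a i).
  rewrite big_enum; apply/meetsP => i; rewrite inE => /andP[iJ iI].
  by apply: (meets_max (j := i)) => //; rewrite /ehat (negbTE iJ).
apply: le_trans (leI2 (lexx _) X) _; apply: le_trans (Ra _ _) _.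
apply: hmono; apply: Fmono; apply/subsetP => x; rewrite !inE mem_enum inE.
by case: (x \in J); case: (x \in I).
Qed.

Lemma pminus_le J : polyfun (cminus h a F) (fun i => h (ehat a b J i)) <= h (F J).
Proof.
apply/joinsP => I _; rewrite /cminus; apply: le_trans (lemA I J).
by apply: leI2 => //; apply: leIl.
Qed.

Lemma pplus_le J : polyfun (cplus h b F) (fun i => h (ehat a b J i)) <= h (F J).
Proof.
apply/joinsP => I _; rewrite /cplus meetUl leUx lemA /=.
set M := \meet_(i in I) _.
have X : \join_(i in I) ~` h (b i) <= ~` M.
  apply/joinsP => i iI; rewrite leC; apply: (meets_max (j := i)) => //.
  by apply: hmono; rewrite /ehat; case: (i \in J).
apply: le_trans (leI2 X (lexx M)) _; rewrite meetC meetxC; exact: le0x.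
Qed.

Lemma Bl J : h (F J) <= polyfun (cminus h a F) (fun i => h (ehat a b J i)).
Proof.
set u := fun i => h (ehat a b J i).
have top : \meet_(i : 'I_n) \join_(j : bool) (if j then u i else ~` u i) = \top.
  by apply: big1 => i _; rewrite big_bool /= joinxC.
have -> : h (F J) = h (F J) `&` \meet_(i : 'I_n) \join_(j : bool) (if j then u i else ~` u i).
  by rewrite top meetx1.
rewrite bigA_distr_bigA big_distrr /=.
apply/joinsP => f _.
apply: (joins_min (j := [set i | f i])) => //.
rewrite /cminus !lexI; apply/andP; split; first (apply/andP; split).
- have X : \meet_i (if f i then u i else ~` u i) <= \meet_(i <- enum (J :\: [set i | f i])) ~` h (b i).
    rewrite big_enum; apply/meetsP => i; rewrite !inE => /andP[fi iJ].
    by apply: (meets_max (j := i)) => //; rewrite (negbTE fi) /u /ehat iJ.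
  apply: le_trans (leI2 (lexx _) X) _; apply: le_trans (Rb _ _) _.
  apply: hmono; apply: Fmono; apply/subsetP => x; rewrite !inE mem_enum !inE.
  by case: (f x); case: (x \in J).
- apply: leIxr; apply/meetsP => i; rewrite inE => fi.
  apply: (meets_max (j := i)) => //; rewrite (negbTE fi) leC; apply: hmono.
  by rewrite /ehat; case: (i \in J).
- apply: leIxr; apply/meetsP => i; rewrite inE => fi.
  by apply: (meets_max (j := i)) => //; rewrite fi.
Qed.

End Aux.

Lemma pf_mono (dB : Order.disp_t) (B : ctbDistrLatticeType dB) (n : nat)
  (c d : {set 'I_n} -> B) x : (forall I, c I <= d I) -> polyfun c x <= polyfun d x.
Proof.
move=> H; apply/joinsP => I _; apply: (joins_min (j := I)) => //; exact: leI2.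
Qed.

Theorem theorem3p5 (dL dB : Order.disp_t) (L : distrLatticeType dL)
  (B : ctbDistrLatticeType dB) (h : L -> B)
  (hemb : lattice_embedding h) (hgen : generates_boolean h)
  (n : nat) (hn : (0 < n)%N) (a b : 'I_n -> L) (hab : forall i, a i < b i)
  (F : {set 'I_n} -> L)
  (Fmono : forall I J : {set 'I_n}, I \subset J -> F I <= F J)
  (Fcond : forall (I : {set 'I_n}) (k : 'I_n),
      F (k |: I) `&` a k <= F I /\ F I <= F (I :\ k) `|` b k)
  (c : {set 'I_n} -> B) (cmono : monotone_coeffs c) :
  [<-> (forall I : {set 'I_n}, polyfun c (fun i => h (ehat a b I i)) = h (F I));
       (forall I : {set 'I_n}, cminus h a F I <= c I /\ c I <= cplus h b F I);
       (forall x : 'I_n -> L,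
          polyfun (cminus h a F) (fun i => h (x i)) <= polyfun c (fun i => h (x i)) /\
          polyfun c (fun i => h (x i)) <= polyfun (cplus h b F) (fun i => h (x i)))].
Proof.
have hab' : forall i, a i <= b i by move=> i; apply: ltW.
tfae.
- move=> H I; split.
  + rewrite /cminus -(H I) /polyfun big_distrl /=.
    apply/joinsP => J _.
    have [JI | /subsetPn [j jJ jI]] := boolP (J \subset I).
      by apply: leIxl; apply: leIxl; apply: cmono.
    have X : (c J `&` \meet_(i in J) h (ehat a b I i)) `&` \meet_(i | i \notin I) ~` h (a i)
             <= h (a j) `&` ~` h (a j).
      apply: leI2.
        by apply: leIxr; apply: (meets_max (j := j)) => //; rewrite /ehat (negbTE jI).
      exact: (meets_inf (j := j)).
    by apply: le_trans X _; rewrite meetxC le0x.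
  + rewrite /cplus -compl_meets; apply: shunt; rewrite -(H I).
    apply: (joins_min (j := I)) => //; apply: leI2 => //.
    apply/meetsP => i iI; apply: (meets_max (j := i)) => //.
    by rewrite /ehat iI.
- move=> H x; split; apply: pf_mono => I; by case: (H I).
- move=> H J; apply/eqP; rewrite eq_le; apply/andP; split.
  + apply: le_trans (H (ehat a b J)).2 _; exact: pplus_le.
  + apply: le_trans _ (H (ehat a b J)).1; exact: Bl.
Qed.
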